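(* Let $\langle (x_n,y_n)\rangle_{n\in\mathbb{N}}$ be the solutions in $\mathbb{N}^2$ of $x^2-19\,y^2=1$, indexed so that $y_0<y_1<\cdots$. Let $\bar r,\bar s,\bar v,\bar u\in\mathbb{Z}$ satisfy \[171\,(\bar r^2+\bar r\bar s+5\bar s^2)^2-169\,(\bar v^2+\bar v\bar u+5\bar u^2)^2=2\] with $\bar r\neq\pm1$ or $\bar s\neq 0$. Then for every $\ell\geq 0$, \[ 39\,(\bar r^2+\bar r\bar s+5\bar s^2)(\bar v^2+\bar v\bar u+5\bar u^2)\nmid y_{2^{2\ell+1}}. \]
   Context: $(x_0,y_0)=(1,0)$, $(x_1,y_1)=(170,39)$, $x_n+y_n\sqrt{19}=(170+39\sqrt{19})^n$. *)

(* Defs.v *)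
From Stdlib Require Import ZArith.
Open Scope Z_scope.

(* pell n = (x_n, y_n) with x_n + y_n sqrt 19 = (170 + 39 sqrt 19)^n,
   i.e. the n-th nonnegative solution of x^2 - 19 y^2 = 1 ordered by y
   ((x_0,y_0) = (1,0), (x_1,y_1) = (170,39)). Multiplying by 170+39 sqrt 19
   gives the recurrence below. *)
Fixpoint pell (n : nat) : Z * Z :=
  match n with
  | O => (1, 0)
  | S m => let '(x, y) := pell m in (170 * x + 741 * y, 39 * x + 170 * y)
  end.

Definition pell_x (n : nat) : Z := fst (pell n).
Definition pell_y (n : nat) : Z := snd (pell n).

Definition Q (a b : Z) : Z := a * a + a * b + 5 * b * b.

(* Main.v *)
Require Import Defs.
From Stdlib Require Import ZArith Znumtheory Lia Psatz List.
Open Scope Z_scope.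

Lemma pell_S k : pell_x (S k) = 170 * pell_x k + 741 * pell_y k /\
                 pell_y (S k) = 39 * pell_x k + 170 * pell_y k.
Proof. unfold pell_x, pell_y; simpl; destruct (pell k); simpl; auto. Qed.

Lemma pell_add m n : pell_x (m + n) = pell_x m * pell_x n + 19 * pell_y m * pell_y n /\
                     pell_y (m + n) = pell_x m * pell_y n + pell_y m * pell_x n.
Proof.
  induction m as [|m [IH1 IH2]].
  - change (0 + n)%nat with n. change (pell_x 0) with 1. change (pell_y 0) with 0. split; ring.
  - simpl (S m + n)%nat. destruct (pell_S (m+n)) as [E1 E2]. destruct (pell_S m) as [F1 F2].
    rewrite E1, E2, F1, F2, IH1, IH2. split; ring.
Qed.

Lemma pell_norm n : pell_x n * pell_x n - 19 * pell_y n * pell_y n = 1.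
Proof.
  induction n. { unfold pell_x, pell_y; simpl; ring. }
  destruct (pell_S n) as [E1 E2]; rewrite E1, E2.
  assert (H: forall x y, (170*x+741*y)*(170*x+741*y) - 19*(39*x+170*y)*(39*x+170*y) = x*x - 19*y*y) by (intros; ring).
  rewrite H; auto.
Qed.

Lemma pell_mul A m j : (A | pell_y m) -> (A | pell_y (j * m)).
Proof.
  intros H. induction j. { simpl. unfold pell_y; simpl. exists 0; ring. }
  simpl (S j * m)%nat. destruct (pell_add m (j*m)) as [_ E]. rewrite E.
  apply Z.divide_add_r; [apply Z.divide_mul_r | apply Z.divide_mul_l]; auto.
Qed.

Lemma bez k L : exists a b : nat, (a * (2*k+1) = 1 + b * 2^L)%nat.
Proof.
  induction L. { exists 1%nat, (2*k)%nat. simpl. lia. }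
  destruct IHL as [a [b E]]. rewrite Nat.pow_succ_r'.
  destruct (Nat.Even_or_Odd b) as [[b' Hb]|[b' Hb]]; subst b.
  - exists a, b'. nia.
  - exists (a + 2^L)%nat, (b' + k + 1)%nat. nia.
Qed.

Lemma y3 L : exists w, pell_y (2^L) = 3 * w /\ ~ (3 | w).
Proof.
  induction L.
  { exists 13. split. reflexivity. intros [c Hc]. lia. }
  destruct IHL as [w [E Hw]].
  rewrite Nat.pow_succ_r'. replace (2 * 2^L)%nat with (2^L + 2^L)%nat by lia.
  destruct (pell_add (2^L) (2^L)) as [_ F]. rewrite F, E.
  exists (2 * pell_x (2^L) * w). split. ring.
  intros Hd.
  assert (Hx: ~ (3 | pell_x (2^L))).
  { intros [c Hc]. pose proof (pell_norm (2^L)) as N. rewrite Hc, E in N. lia. }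
  destruct (prime_mult 3 prime_3 _ _ Hd) as [H1|H1]; auto.
  destruct (prime_mult 3 prime_3 _ _ H1) as [H2|H2]; auto.
  destruct H2 as [c Hc]; lia.
Qed.
Definition chk : bool :=
  forallb (fun y => forallb (fun x => negb (Z.eqb (x*x) (19*y*y-2)))
     (map Z.of_nat (seq 0 276))) (map Z.of_nat (seq 4 52)).
Lemma chk_true : chk = true. Proof. vm_compute. reflexivity. Qed.
Lemma nosol X Y : 4 <= Y <= 55 -> 0 <= X <= 275 -> X*X <> 19*Y*Y-2.
Proof.
  intros HY HX E. pose proof chk_true as C. unfold chk in C.
  rewrite forallb_forall in C.
  assert (InY: In Y (map Z.of_nat (seq 4 52))).
  { replace Y with (Z.of_nat (Z.to_nat Y)) by lia. apply in_map. apply in_seq. lia. }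
  specialize (C _ InY). rewrite forallb_forall in C.
  assert (InX: In X (map Z.of_nat (seq 0 276))).
  { replace X with (Z.of_nat (Z.to_nat X)) by lia. apply in_map. apply in_seq. lia. }
  specialize (C _ InX). rewrite E, Z.eqb_refl in C. discriminate.
Qed.

Lemma descent n : forall X Y, 0 <= X -> 0 <= Y -> Y <= Z.of_nat n -> X*X - 19*Y*Y = -2 ->
  exists k, X = 13 * pell_x k + 57 * pell_y k /\ Y = 3 * pell_x k + 13 * pell_y k.
Proof.
  induction n as [|n IH]; intros X Y HX HY Hn E.
  - assert (Y = 0) by lia. subst. nia.
  - destruct (Z_lt_le_dec Y 56) as [Hs|Hb].
    + destruct (Z_lt_le_dec Y 4) as [Hs4|Hb4].
      * assert (Y = 0 \/ Y = 1 \/ Y = 2 \/ Y = 3) as HY' by lia.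
        destruct HY' as [ -> | [ -> | [ -> | -> ] ] ].
        -- nia.
        -- assert (X <= 4 \/ X >= 5) by lia. nia.
        -- assert (X <= 8 \/ X >= 9) by lia. nia.
        -- assert (X <= 12 \/ X = 13 \/ X >= 14) as [h|[h|h]] by lia; [nia| |nia].
           exists 0%nat. subst. split; reflexivity.
      * exfalso. assert (X <= 275) by nia. apply (nosol X Y); lia.
    + set (X' := 170*X - 741*Y). set (Y' := 170*Y - 39*X).
      assert (HX' : 0 <= X').
      { unfold X'. destruct (Z_le_gt_dec (741*Y) (170*X)); [lia|].
        assert ((741*Y - 170*X) * (741*Y + 170*X) > 0) by nia. nia. }
      assert (HY' : 0 <= Y').
      { unfold Y'. destruct (Z_le_gt_dec (39*X) (170*Y)); [lia|].
        assert ((39*X - 170*Y) * (39*X + 170*Y) > 0) by nia. nia. }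
      assert (HYY : Y' < Y).
      { unfold Y'. destruct (Z_lt_le_dec (169*Y) (39*X)); [lia|].
        assert ((169*Y - 39*X) * (169*Y + 39*X) >= 0) by nia. nia. }
      assert (E' : X'*X' - 19*Y'*Y' = -2).
      { unfold X', Y'. rewrite <- E. ring. }
      destruct (IH X' Y' HX' HY' ltac:(lia) E') as [k [Ek1 Ek2]].
      exists (S k). destruct (pell_S k) as [F1 F2]. rewrite F1, F2.
      assert (X = 170*X' + 741*Y') by (unfold X', Y'; ring).
      assert (Y = 39*X' + 170*Y') by (unfold X', Y'; ring).
      split; nia.
Qed.

Lemma Q_nonneg a b : 4 * Q a b = (2*a+b)*(2*a+b) + 19*b*b.
Proof. unfold Q; ring. Qed.

Theorem mainTheorem8 (r s v u : Z) :
  171 * (Q r s) ^ 2 - 169 * (Q v u) ^ 2 = 2 ->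
  ((r <> 1 /\ r <> -1) \/ s <> 0) ->
  forall l : nat, ~ (39 * Q r s * Q v u | pell_y (Nat.pow 2 (2 * l + 1))).
Proof.
  intros H Hrs l Hdiv.
  rewrite !Z.pow_2_r in H.
  pose proof (Q_nonneg r s) as HQ.
  set (A := Q r s) in *. set (B := Q v u) in *.
  set (N := Nat.pow 2 (2*l+1)) in *.
  assert (HA0 : 0 < A).
  { assert (A <> 0).
    { intro h. rewrite h in H. pose proof (Z.square_nonneg B). lia. }
    pose proof (Z.square_nonneg (2*r+s)). pose proof (Z.square_nonneg s). lia. }
  assert (HA1 : A <> 1).
  { intro h. rewrite h in HQ.
    assert (s = 0) by nia. subst s.
    assert (r <= -2 \/ r = -1 \/ r = 0 \/ r = 1 \/ r >= 2) as C by lia.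
    destruct C as [c|[c|[c|[c|c]]]]; try nia; subst; destruct Hrs as [[h1 h2]|h3]; lia. }
  destruct (descent (Z.to_nat (3*A)) (13 * Z.abs B) (3*A) ltac:(lia) ltac:(lia) ltac:(lia))
    as [k [Ek1 Ek2]].
  { assert (Z.abs B * Z.abs B = B * B) by (destruct (Z.abs_spec B) as [[_ ->]|[_ ->]]; ring).
    lia. }
  assert (Hm : (A | pell_y (2*k+1))).
  { replace (2*k+1)%nat with (k + S k)%nat by lia.
    destruct (pell_add k (S k)) as [_ F]. destruct (pell_S k) as [F1 F2].
    rewrite F, F1, F2.
    exists (39 * Z.abs B). transitivity ((13*Z.abs B)*(3*A)); [rewrite Ek1, Ek2; ring | ring]. }
  assert (HN : (A | pell_y N)).
  { apply Z.divide_trans with (39 * A * B); auto. exists (39*B). ring. }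
  destruct (bez k (2*l+1)) as [a [b Eb]].
  pose proof (pell_mul A _ a Hm) as Ha. pose proof (pell_mul A _ b HN) as Hb.
  unfold N in Hb. rewrite Eb in Ha.
  destruct (pell_add 1 (b * 2^(2*l+1))) as [_ F]. rewrite F in Ha.
  change (pell_x 1) with 170 in Ha. change (pell_y 1) with 39 in Ha.
  set (xx := pell_x (b * 2 ^ (2 * l + 1))) in *.
  set (yy := pell_y (b * 2 ^ (2 * l + 1))) in *.
  assert (H39x : (A | 39 * xx)).
  { replace (39*xx) with ((170*yy + 39*xx) - 170*yy) by ring.
    apply Z.divide_sub_r; auto. apply Z.divide_mul_r; auto. }
  assert (Hrp : rel_prime A xx).
  { apply bezout_rel_prime. destruct Hb as [w Hw].
    apply Bezout_intro with (-19 * w * yy) xx.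
    pose proof (pell_norm (b * 2 ^ (2 * l + 1))) as Nm. fold xx yy in Nm.
    rewrite Hw in Nm at 2. rewrite <- Nm. ring. }
  assert (H39 : (A | 39)).
  { apply Gauss with xx; auto. rewrite Z.mul_comm; auto. }
  assert (H3 : ~ (3 | A)).
  { intros [c Hc]. destruct (y3 (2*l+1)) as [w [Ew Hw]]. fold N in Ew.
    destruct Hdiv as [d Hd]. rewrite Ew in Hd. apply Hw. exists (13*d*c*B). nia. }
  assert (H13 : ~ (13 | A)).
  { intros [c Hc]. rewrite Hc in H.
    assert (2 = 13*(13*171*c*c - 13*B*B)) by (rewrite <- H; ring). lia. }
  assert (HAle : A <= 39) by (apply Z.divide_pos_le; auto; lia).
  destruct H39 as [c Hc].
  assert (A = 3 \/ A = 13 \/ A = 39 \/ (A <> 1 /\ A <> 3 /\ A <> 13 /\ A <> 39)) as [h|[h|[h|h]]] by lia.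
  - apply H3. rewrite h. exists 1; ring.
  - apply H13. rewrite h. exists 1; ring.
  - apply H3. rewrite h. exists 13; ring.
  - clearbody A. assert (1 <= c <= 39) by nia.
    assert (A = 1 \/ A = 2 \/ A = 3 \/ A = 4 \/ A = 5 \/ A = 6 \/ A = 7 \/ A = 8 \/ A = 9 \/ A = 10 \/ A = 11 \/ A = 12 \/ A = 13 \/ A = 14 \/ A = 15 \/ A = 16 \/ A = 17 \/ A = 18 \/ A = 19 \/ A = 20 \/ A = 21 \/ A = 22 \/ A = 23 \/ A = 24 \/ A = 25 \/ A = 26 \/ A = 27 \/ A = 28 \/ A = 29 \/ A = 30 \/ A = 31 \/ A = 32 \/ A = 33 \/ A = 34 \/ A = 35 \/ A = 36 \/ A = 37 \/ A = 38 \/ A = 39) by lia.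
    repeat match goal with
           | Hor : _ \/ _ |- _ => destruct Hor as [?|Hor]
           end; subst A; lia.
Qed.
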